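(* Assume (H2.4) and (H3.1). Let $N\in\mathbb{N}$. If the operator $I_{X^{+}}-\mathcal{L}_{N}^{+}\mathcal{F}_{s}V^{+}\colon X^{+}\to X^{+}$ is invertible, then for each $\phi\in\widehat{X}$ the equation $$z=\mathcal{L}_{N}^{+}\mathcal{F}_{s}V(\phi,z)$$ has a unique solution $w^{\ast}\in X^{+}$, the equation $$Z=R_{N}^{+}\mathcal{F}_{s}V(\phi,P_{N}^{+}Z)$$ has a unique solution $Z^{\ast}\in X_{N}^{+}$, and $Z^{\ast}=R_{N}^{+}w^{\ast}$ and $w^{\ast}=P_{N}^{+}Z^{\ast}$ hold.
   Context: Let $d\ge 1$ be an integer and $\tau>0$, $h>0$ real. $X$, $X^{+}$, $X^{\pm}$ are real normed spaces of functions $[-\tau,0]\to\mathbb{R}^{d}$, $[0,h]\to\mathbb{R}^{d}$, $[-\tau,h]\to\mathbb{R}^{d}$, respectively. $V\colon X\times X^{+}\to X^{\pm}$ and $\mathcal{F}_{s}\colon X^{\pm}\to X^{+}$ are linear operators, and $V^{-}\colon X\to X^{\pm}$, $V^{+}\colon X^{+}\to X^{\pm}$ are $V^{-}\phi:=V(\phi,0_{X^{+}})$, $V^{+}z:=V(0_{X},z)$, so that $V(\phi,z)=V^{-}\phi+V^{+}z$. Let $\widetilde{X}^{+}$ be a linear subspace of $X^{+}$. For $N\in\mathbb{N}$, $X_{N}^{+}$ is a finite-dimensional space (identified with $\mathbb{R}^{d(N+1)}$), $R_{N}^{+}\colon\widetilde{X}^{+}\to X_{N}^{+}$ and $P_{N}^{+}\colon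 X_{N}^{+}\to X^{+}$ are linear with $R_{N}^{+}P_{N}^{+}=I_{X_{N}^{+}}$, and $\mathcal{L}_{N}^{+}:=P_{N}^{+}R_{N}^{+}$. Hypothesis (H2.4): there is a linear subspace $\widehat{X}^{+}\subseteq\widetilde{X}^{+}$ with a norm making it complete, such that the range of $\mathcal{F}_{s}V^{+}\colon X^{+}\to X^{+}$ is contained in $\widehat{X}^{+}$ and $\mathcal{F}_{s}V^{+}\colon X^{+}\to\widehat{X}^{+}$ is bounded. Hypothesis (H3.1): there is a linear subspace $\widehat{X}\subseteq X$ with a norm making it complete such that the range of $\mathcal{F}_{s}V^{-}$ restricted to $\widehat{X}$ is contained in $\widehat{X}^{+}$ and $\mathcal{F}_{s}V^{-}|_{\widehat{X}}\colon\widehat{X}\to\widehat{X}^{+}$ is bounded. *)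

(* Defs.v *)
From HB Require Import structures.
From mathcomp Require Import all_boot all_order all_algebra.
From mathcomp Require Import all_classical all_reals all_analysis.
Set Implicit Arguments. Unset Strict Implicit. Unset Printing Implicit Defensive.
Import Order.TTheory GRing.Theory Num.Theory.
Import numFieldNormedType.Exports.
Local Open Scope ring_scope.

Definition is_subspace (R : realType) (U : lmodType R) (S : U -> Prop) : Prop :=
  S 0 /\ forall (a : R) (x y : U), S x -> S y -> S (a *: x + y).

Definition linear_on (R : realType) (U W : lmodType R) (S : U -> Prop)
  (f : U -> W) : Prop :=
  forall (a : R) (x y : U), S x -> S y -> f (a *: x + y) = a *: f x + f y.

Definition bounded_op (R : realType) (U W : normedModType R) (f : U -> W) : Prop :=
  exists C : R, forall x : U, `|f x| <= C * `|x|.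

(* Main.v *)
Require Import Defs.
From HB Require Import structures.
From mathcomp Require Import all_boot all_order all_algebra.
From mathcomp Require Import all_classical all_reals all_analysis.
Import Order.TTheory GRing.Theory Num.Theory.
Import numFieldNormedType.Exports.
Local Open Scope ring_scope.

Theorem corollary4p2 (R : realType) (d N : nat)
  (X Xp Xpm : normedModType R)
  (V : {linear (X * Xp)%type -> Xpm}) (Fs : {linear Xpm -> Xp})
  (Xt : Xp -> Prop) (Xt_sub : is_subspace Xt)
  (RN : Xp -> 'rV[R]_(d * N.+1)) (PN : {linear 'rV[R]_(d * N.+1) -> Xp})
  (RN_lin : linear_on Xt RN)
  (PN_Xt : forall Z, Xt (PN Z))
  (RNPN : forall Z, RN (PN Z) = Z)
  (* (H2.4) *)
  (Xhp : completeNormedModType R) (ihp : {linear Xhp -> Xp})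
  (ihp_inj : injective ihp) (ihp_Xt : forall u, Xt (ihp u))
  (G : {linear Xp -> Xhp}) (G_bdd : bounded_op G)
  (G_def : forall z, ihp (G z) = Fs (V (0, z)))
  (* (H3.1) *)
  (Xh : completeNormedModType R) (ih : {linear Xh -> X})
  (ih_inj : injective ih)
  (H : {linear Xh -> Xhp}) (H_bdd : bounded_op H)
  (H_def : forall psi, ihp (H psi) = Fs (V (ih psi, 0))) :
  bijective (fun z : Xp => z - PN (RN (Fs (V (0, z))))) ->
  forall psi : Xh,
    (exists! w : Xp, w = PN (RN (Fs (V (ih psi, w))))) /\
    (exists! Z : 'rV[R]_(d * N.+1), Z = RN (Fs (V (ih psi, PN Z)))) /\
    (forall (w : Xp) (Z : 'rV[R]_(d * N.+1)),
        w = PN (RN (Fs (V (ih psi, w)))) ->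
        Z = RN (Fs (V (ih psi, PN Z))) ->
        Z = RN w /\ w = PN Z).
Proof.
move=> [Ti Tl Tr] psi.
set T := (fun z : Xp => z - PN (RN (Fs (V (0, z))))) in Tl Tr.
set c := PN (RN (Fs (V (ih psi, 0)))).
have decomp : forall w, RN (Fs (V (ih psi, w))) =
    RN (Fs (V (ih psi, 0))) + RN (Fs (V (0, w))).
  move=> w.
  have -> : (ih psi, w) = (ih psi, 0) + (0, w) :> (X * Xp)%type.
    by apply/pair_equal_spec; rewrite /= ?addr0 ?add0r.
  rewrite !linearD /=.
  have := RN_lin 1 _ _ (ihp_Xt (H psi)) (ihp_Xt (G w)).
  by rewrite H_def G_def !scale1r.
have eqw : forall w, (w = PN (RN (Fs (V (ih psi, w))))) <-> T w = c.
  move=> w; rewrite decomp linearD /= /T /c; split.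
    by move=> {1}->; rewrite addrK.
  by move=> E; rewrite -E subrK.
have uniqw : forall w1 w2, w1 = PN (RN (Fs (V (ih psi, w1)))) ->
    w2 = PN (RN (Fs (V (ih psi, w2)))) -> w1 = w2.
  move=> w1 w2 /eqw E1 /eqw E2.
  by rewrite -(Tl w1) -(Tl w2) E1 E2.
have ws : Ti c = PN (RN (Fs (V (ih psi, Ti c)))) by apply/eqw; rewrite Tr.
have Zw : forall Z, Z = RN (Fs (V (ih psi, PN Z))) ->
    PN Z = PN (RN (Fs (V (ih psi, PN Z)))) by move=> Z {1}->.
split; first by exists (Ti c); split => // w' Hw'; exact: uniqw _ _ ws Hw'.
split.
  exists (RN (Fs (V (ih psi, Ti c)))); split.
    by rewrite -ws.
  move=> Z HZ; rewrite HZ.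
  by rewrite (uniqw _ _ ws (Zw Z HZ)).
move=> w Z Hw HZ.
have e : w = PN Z := uniqw _ _ Hw (Zw Z HZ).
split => //.
by rewrite {1}HZ -e {2}Hw RNPN.
Qed.
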